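(* Let $\Sigma$ be an alphabet with at least two letters and $f\colon\Sigma^*\to\Sigma^*$ RCP. If there exists $u\in\Sigma^*$ with $u\neq\varepsilon$ and $f(u)=\varepsilon$, then $f(x)=\varepsilon$ for all $x\in\Sigma^*$.
   Context: $\Sigma^*$ is the free monoid over $\Sigma$ (finite words, concatenation, empty word $\varepsilon$). A function $f\colon(\Sigma^* )^k\to\Sigma^*$ is RCP if for every monoid morphism $\varphi\colon\Sigma^*\to\Sigma^*$ and all $u_1,\ldots,u_k,v_1,\ldots,v_k$ with $\varphi(u_i)=\varphi(v_i)$ for all $i$, we have $\varphi(f(u_1,\ldots,u_k))=\varphi(f(v_1,\ldots,v_k))$. *)

(* Defs.v *)
From mathcomp Require Import all_boot.
Set Implicit Arguments. Unset Strict Implicit. Unset Printing Implicit Defensive.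

Definition monoid_morphism (Sigma : Type) (phi : seq Sigma -> seq Sigma) : Prop :=
  phi [::] = [::] /\ forall u v, phi (u ++ v) = phi u ++ phi v.

Definition RCP1 (Sigma : Type) (f : seq Sigma -> seq Sigma) : Prop :=
  forall phi : seq Sigma -> seq Sigma, monoid_morphism phi ->
    forall u v : seq Sigma, phi u = phi v -> phi (f u) = phi (f v).

(* Main.v *)
Require Import Defs.
From mathcomp Require Import all_boot.
From mathcomp Require Import zify.
Set Implicit Arguments. Unset Strict Implicit.

Definition phi (Sigma : eqType) (p q : nat) (c : Sigma) (w : seq Sigma) : seq Sigma :=
  flatten (map (fun d => if d == c then nseq p c else nseq q c) w).

Lemma phi_morph (Sigma : eqType) p q (c : Sigma) : Defs.monoid_morphism (phi p q c).
Proof. split; first by []. by move=> u v; rewrite /phi map_cat flatten_cat. Qed.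

Lemma cnt_size (Sigma : eqType) (c : Sigma) w :
  count_mem c w + count (fun d => d != c) w = size w.
Proof.
elim: w => [|d w IH] //=; rewrite -IH.
by case: (d == c) => /=; rewrite ?add0n ?add1n ?addn0 ?addnS.
Qed.

Lemma phiE (Sigma : eqType) p q (c : Sigma) w :
  phi p q c w = nseq (p * count_mem c w + q * count (fun d => d != c) w) c.
Proof.
elim: w => [|d w IH]; first by rewrite /phi /= !muln0.
rewrite /phi /= -/(phi p q c w) IH.
case: (d == c) => /=; rewrite ?add0n ?add1n !mulnSr ?muln0 -nseqD; congr nseq; lia.
Qed.

Lemma other (Sigma : finType) (hSigma : 2 <= #|Sigma|) (c : Sigma) :
  exists e, e != c.
Proof.
case: (pickP (fun e => e != c)) => [e He|H]; first by exists e.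
exfalso. have : #|Sigma| <= 1.
  rewrite -(card1 c). apply: subset_leq_card. apply/subsetP => y _.
  by move/negbT: (H y); rewrite negbK inE.
by rewrite leqNgt hSigma.
Qed.

Lemma step (Sigma : finType) (hSigma : 2 <= #|Sigma|)
    (f : seq Sigma -> seq Sigma) (hf : RCP1 f) (N : nat) (hN : 0 < N)
    (hG : forall v, size v = N -> f v = [::]) :
  forall x, size x <= N.+1 -> f x = [::].
Proof.
move=> x hx. case E: (f x) => [|c t] //. exfalso.
have [e He] := other hSigma c.
have hc : 0 < count_mem c (f x) by rewrite E /= eqxx.
have HS := cnt_size c x.
have hne : forall k, 0 < k -> nseq k c <> [::] by case.
have ec : (e == c) = false by apply/negbTE.
case: (leqP (count_mem c x) N) => hA.
- have := hf _ (phi_morph 1 0 c) x (nseq (count_mem c x) c ++ nseq (N - count_mem c x) e).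
  rewrite !phiE (hG (nseq _ c ++ _)); last by rewrite size_cat !size_nseq subnKC.
  rewrite count_cat !count_nseq /= ?eqxx ?ec /= => H.
  apply: (hne (1 * count_mem c (f x) + 0 * count (fun d => d != c) (f x))); first lia.
  apply: H. congr nseq. lia.
- have hA' : count_mem c x = N.+1.
    have : count_mem c x <= size x by rewrite -HS leq_addr.
    lia.
  have hB : count (fun d => d != c) x = 0.
    move: HS hx; rewrite hA'; move: (count _ x) (size x) => k z; lia.
  have := hf _ (phi_morph N N.+1 c) x (nseq N e).
  rewrite !phiE (hG (nseq N e)) ?size_nseq // !count_nseq /= ?ec ?He /= hA' hB => H.
  apply: (hne (N * count_mem c (f x) + N.+1 * count (fun d => d != c) (f x))).
    by rewrite addn_gt0 muln_gt0 hN hc.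
  rewrite H; first by rewrite !muln0. congr nseq. lia.
Qed.

Theorem mainTheorem7 (Sigma : finType) (hSigma : 2 <= #|Sigma|)
    (f : seq Sigma -> seq Sigma) (hf : RCP1 f)
    (u : seq Sigma) (hu : u <> [::]) (hfu : f u = [::]) :
  forall x : seq Sigma, f x = [::].
Proof.
have hn : 0 < size u by move: hu; case: (u).
have G0 : forall v, size v = size u -> f v = [::].
  move=> v sv. case E: (f v) => [|c t] //. exfalso.
  have := hf _ (phi_morph 1 1 c) u v.
  rewrite !phiE !mul1n !cnt_size sv hfu /= E /= => H.
  by have := H erefl.
have Gk : forall k v, size v = size u + k -> f v = [::].
  elim=> [|k IH] v sv; first by apply: G0; rewrite sv addn0.
  apply: (step hSigma hf _ IH); first by rewrite addn_gt0 hn.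
  by rewrite sv addnS.
move=> x. case: (leqP (size x) (size u).+1) => h.
- exact: (step hSigma hf hn G0).
- apply: (Gk (size x - size u)). rewrite subnKC //. apply: ltnW. exact: ltnW.
Qed.
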